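(* If $v_1$ and $v_2$ are symmetric submodular valuations on a finite set $X$, then $v_1\vee v_2$ is submodular (and symmetric).
   Context: A valuation on a finite set $X$ is a function $v:2^X\to\mathbb{R}_{\ge 0}$ with $v(\emptyset)=0$ and monotone under inclusion; it is symmetric if $v(S)$ depends only on $|S|$; it is submodular if $v(A)+v(B)\ge v(A\cup B)+v(A\cap B)$ for all $A,B\subseteq X$. $(v_1\vee v_2)(S)=\max_{T\subseteq S}(v_1(T)+v_2(S\setminus T))$. *)

(* Defs.v *)
From mathcomp Require Import all_boot all_order all_algebra.
From mathcomp Require Import all_reals.
Set Implicit Arguments. Unset Strict Implicit. Unset Printing Implicit Defensive.
Import Order.TTheory GRing.Theory Num.Theory.
Local Open Scope ring_scope.

Definition valuation (R : realType) (X : finType) (v : {set X} -> R) : Prop :=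
  v set0 = 0 /\ (forall S, 0 <= v S) /\
  (forall A B : {set X}, A \subset B -> v A <= v B).

Definition symmetric_val (R : realType) (X : finType) (v : {set X} -> R) : Prop :=
  forall A B : {set X}, #|A| = #|B| -> v A = v B.

Definition submodular (R : realType) (X : finType) (v : {set X} -> R) : Prop :=
  forall A B : {set X}, v (A :|: B) + v (A :&: B) <= v A + v B.

(* (v1 \/ v2)(S) = max_{T subset S} v1(T) + v2(S \ T).  The big max over the
   (nonempty) powerset with neutral element 0; since all values are
   nonnegative for valuations this is the true maximum. *)
Definition join_val (R : realType) (X : finType) (v1 v2 : {set X} -> R)
  (S : {set X}) : R :=
  \big[Num.max/0]_(T in powerset S) (v1 T + v2 (S :\: T)).

(* Main.v *)
Require Import Defs.
From mathcomp Require Import all_boot all_order all_algebra.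
From mathcomp Require Import all_reals.
From mathcomp Require Import zify lra.
Import Order.TTheory GRing.Theory Num.Theory.
Local Open Scope ring_scope.

Lemma sub_card (X : finType) (S : {set X}) k : (k <= #|S|)%N ->
  exists T : {set X}, T \subset S /\ #|T| = k.
Proof.
move=> hk; exists [set x in take k (enum S)]; split.
  by apply/subsetP=> x; rewrite inE => /mem_take; rewrite mem_enum.
rewrite cardsE; have /card_uniqP -> : uniq (take k (enum S)) by rewrite take_uniq ?enum_uniq.
by rewrite size_take -cardE; case: ltnP => //; lia.
Qed.

Lemma cardD_sub (X : finType) (S T : {set X}) : T \subset S -> #|S :\: T| = (#|S| - #|T|)%N.
Proof. by move=> h; rewrite cardsD (setIidPr h). Qed.

Lemma arith t t' a b u i : (i + u = a + b -> i <= a -> a <= u -> i <= b -> b <= u -> t <= u -> t' <= i ->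
 exists ja jb, [/\ ja <= a, jb <= b, ja + jb = t + t',
   (t' <= ja <= t) || (t <= ja <= t') &
   (i - t' <= a - ja <= u - t) || (u - t <= a - ja <= i - t')])%N.
Proof.
move=> *; case: (leqP t' t) => h.
  exists (t' + minn (t - t') (a - i))%N, (t - minn (t - t') (a - i))%N; split; lia.
exists (a - ((i - t') + minn ((u - t) - (i - t')) (a - i)))%N,
       (b - ((u - t) - minn ((u - t) - (i - t')) (a - i)))%N; split; lia.
Qed.

Ltac cl := first [by [] | by move=> /(_ isT) | by move=> _ /(_ isT)].

Section S.
Variables (R : realType) (X : finType) (v : {set X} -> R).
Hypotheses (hsym : symmetric_val v) (hsub : submodular v).

Lemma conc (P Q A B : {set X}) : (#|P| <= #|A| <= #|Q|)%N ->
  (#|A| + #|B| = #|P| + #|Q|)%N -> v P + v Q <= v A + v B.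
Proof.
move=> /andP[h1 h2] hs.
have [U [_ cU]] := @sub_card _ ([set: X]) (#|Q|) (subset_leq_card (subsetT Q)).
have [I0 [sI cI]] := @sub_card _ (U) (#|P|) ltac:(lia).
have [D [sD cD]] := @sub_card _ (U :\: I0) ((#|A| - #|P|)%N)
  ltac:(rewrite cardD_sub //; lia).
have DU : D \subset U by apply: subset_trans sD (subsetDl _ _).
have eI : (I0 :|: D) :&: (U :\: D) = I0.
  apply/setP=> z; rewrite !inE.
  move: (subsetP sI z) (subsetP sD z); rewrite !inE.
  by case: (z \in I0); case: (z \in D); case: (z \in U) => //=; cl.
have eU : (I0 :|: D) :|: (U :\: D) = U.
  apply/setP=> z; rewrite !inE.
  move: (subsetP sI z) (subsetP sD z); rewrite !inE.
  by case: (z \in I0); case: (z \in D); case: (z \in U) => //=; cl.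
have cA : #|I0 :|: D| = #|A|.
  rewrite cardsU.
  have -> : I0 :&: D = set0.
    apply/setP=> z; rewrite !inE; move: (subsetP sD z); rewrite !inE.
    by case: (z \in I0); case: (z \in D) => //=; cl.
  rewrite cards0; lia.
have cB : #|U :\: D| = #|B| by rewrite cardD_sub //; lia.
have := hsub (I0 :|: D) (U :\: D); rewrite eI eU.
rewrite (hsym _ _ cA) (hsym _ _ cB) (hsym _ _ (esym cU)) (hsym _ _ (esym cI)).
by rewrite addrC.
Qed.

Lemma conc2 (P Q A B : {set X}) :
  ((#|P| <= #|A| <= #|Q|) || (#|Q| <= #|A| <= #|P|))%N ->
  (#|A| + #|B| = #|P| + #|Q|)%N -> v P + v Q <= v A + v B.
Proof.
case/orP=> h hs; first exact: conc.
rewrite addrC; apply: conc => //; lia.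
Qed.
End S.

Lemma join_ge (R : realType) (X : finType) (v1 v2 : {set X} -> R) (S T : {set X}) :
  T \subset S -> v1 T + v2 (S :\: T) <= join_val v1 v2 S.
Proof. by move=> h; rewrite /join_val; apply: (le_bigmax_cond _ (P := fun T => T \in powerset S)); rewrite powersetE. Qed.

Lemma join_att (R : realType) (X : finType) (v1 v2 : {set X} -> R) (S : {set X}) :
  (forall T, 0 <= v1 T) -> (forall T, 0 <= v2 T) ->
  exists2 T : {set X}, T \subset S & join_val v1 v2 S = v1 T + v2 (S :\: T).
Proof.
move=> p1 p2; rewrite /join_val.
have h0 : set0 \in powerset S by rewrite powersetE sub0set.
have hp : forall T, T \in powerset S -> 0 <= v1 T + v2 (S :\: T).
  by move=> T _; rewrite addr_ge0.
have [T hT ->] := @eq_bigmax _ _ _ 0 set0 (fun T => T \in powerset S)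
   (fun T => v1 T + v2 (S :\: T)) h0 hp.
by exists T => //; rewrite -powersetE.
Qed.

Theorem proposition3 (R : realType) (X : finType) (v1 v2 : {set X} -> R) :
  valuation v1 -> symmetric_val v1 -> submodular v1 ->
  valuation v2 -> symmetric_val v2 -> submodular v2 ->
  submodular (join_val v1 v2) /\ symmetric_val (join_val v1 v2).
Proof.
move=> [_ [p1 _]] s1 m1 [_ [p2 _]] s2 m2.
have symle : forall S S' : {set X}, #|S| = #|S'| -> join_val v1 v2 S <= join_val v1 v2 S'.
  move=> S S' e.
  have [T sT ->] := @join_att _ _ v1 v2 S p1 p2.
  have [T' [sT' cT']] := @sub_card _ S' #|T| ltac:(rewrite -e; exact: subset_leq_card).
  rewrite (s1 _ _ (esym cT')) (s2 (S :\: T) (S' :\: T')); first exact: join_ge.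
  by rewrite !cardD_sub // e cT'.
split; last first.
  by move=> A B e; apply/le_anti; rewrite !symle.
move=> A B.
have [T sT ->] := @join_att _ _ v1 v2 (A :|: B) p1 p2.
have [T' sT' ->] := @join_att _ _ v1 v2 (A :&: B) p1 p2.
have cUI := cardsUI A B.
have := @arith #|T| #|T'| #|A| #|B| #|A :|: B| #|A :&: B|.
have hiA := subset_leq_card (subsetIl A B).
have hiB := subset_leq_card (subsetIr A B).
have huA := subset_leq_card (subsetUl A B).
have huB := subset_leq_card (subsetUr A B).
have ht := subset_leq_card sT.
have ht' := subset_leq_card sT'.
case=> //; first lia.
move=> ja [jb [ja_le jb_le jsum o1 o2]].
have [Ta [sTa cTa]] := @sub_card _ A ja ja_le.
have [Tb [sTb cTb]] := @sub_card _ B jb jb_le.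
apply: (@le_trans _ _ (v1 Ta + v2 (A :\: Ta) + (v1 Tb + v2 (B :\: Tb)))); last first.
  by apply: lerD; apply: join_ge.
have c1 : v1 T' + v1 T <= v1 Ta + v1 Tb.
  apply: conc2 => //; rewrite ?cTa ?cTb; lia.
have c2 : v2 ((A :&: B) :\: T') + v2 ((A :|: B) :\: T) <= v2 (A :\: Ta) + v2 (B :\: Tb).
  apply: conc2 => //; rewrite !cardD_sub // ?cTa ?cTb; lia.
lra.
Qed.
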